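(* Let $k\ge 3$ be an integer. Let $T$ be a $(k-1)^+$-branching tree in which exactly one vertex $y$ has degree $k-1$ (so every other internal vertex has degree at least $k$), and suppose $y$ has a neighbour $z$ that is not a leaf. Let $T'$ be the tree obtained from $T$ by contracting the edge $yz$, i.e., deleting $y$ and adding an edge $zx$ for every neighbour $x\ne z$ of $y$. Then $T'$ is $k^+$-branching and $b^{\{y\}}(T)\le b(T')$.
   Context: In a tree, vertices of degree $1$ are leaves and all other vertices are internal vertices; a tree is $m^+$-branching if every internal vertex has degree at least $m$. Graph burning on a graph $G$: in each round $i=1,2,\dots$ a vertex $b_i$ (a source, possibly already burned) is chosen and burned, and simultaneously every unburned neighbour of a vertex burned by the end of round $i-1$ becomes burned; burned vertices stay burned. A sequence $(b_1,\dots,b_m)$ is a burning sequence if all vertices are burned after round $m$; the burning number $b(G)$ is the minimum length of a burning sequence. Modified burning: for $U\subseteq V(G)$ and vertices $x_1,\dots,x_m$, the sequence $(U\cup\{x_1\},x_2,\dots,x_m)$ burns all vertices of $U\cup\{x_1\}$ in round $1$ and proceeds as in ordinary burning in rounds $i\ge 2$ (burning $x_i$ and spreading); it is a modified burning sequence if all vertices are burned after round $m$. $b^{U}(G)$ is the minimum length $m$ of a modified burning sequence for $G$ with the given set $U$. *)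

(* Defs.v *)
From mathcomp Require Import all_boot.
Set Implicit Arguments. Unset Strict Implicit. Unset Printing Implicit Defensive.

Section Graphs.
Variable V : finType.
Implicit Types (e : rel V).

Definition simple_graph e := symmetric e /\ irreflexive e.

Definition is_tree e :=
  (forall u v : V, connect e u v) /\
  ~ (exists c : seq V, [/\ uniq c, 3 <= size c & cycle e c]).

Definition deg e (v : V) : nat := #|[set u | e v u]|.

Definition is_leaf e v := deg e v == 1.
Definition is_internal e v := deg e v != 1.

Definition branching (m : nat) e := forall v, is_internal e v -> m <= deg e v.

Definition nbhd e (B : {set V}) : {set V} := [set u | [exists v in B, e v u]].

Definition burn_step e (B : {set V}) (x : V) : {set V} := x |: (B :|: nbhd e B).

Definition burn_from e (B0 : {set V}) (xs : seq V) : {set V} :=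
  foldl (burn_step e) B0 xs.

Definition is_burning_seq e (s : seq V) := burn_from e set0 s = [set: V].

(* (U ∪ {x_1}, x_2, ..., x_m) is a modified burning sequence; xs = [x_2;...;x_m],
   its length is (size xs).+1 *)
Definition is_mod_burning_seq e (U : {set V}) (x1 : V) (xs : seq V) :=
  burn_from e (x1 |: U) xs = [set: V].

End Graphs.

Definition contract (V : finType) (e : rel V) (y z : V) : rel {v : V | v != y} :=
  fun u v => (val u != val v) &&
    [|| e (val u) (val v), (val u == z) && e y (val v) | (val v == z) && e y (val u)].
Arguments contract {V} e y z.

(* Main.v *)
Require Import Defs.
From mathcomp Require Import all_boot.
From mathcomp Require Import zify.

Section Aux.
Variables (V : finType) (e : rel V) (y z : V).
Hypothesis sg : simple_graph e.
Hypothesis notri : forall a b c, e a b -> e b c -> e c a -> False.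

Lemma irr_e a : e a a = false.
Proof. by case: sg => _ H; apply: H. Qed.
Lemma sym_e a b : e a b = e b a.
Proof. by case: sg => H _; apply: H. Qed.

Lemma img_contract (v' : {v : V | v != y}) :
  val @: [set u' | contract e y z v' u'] =
  [set w | (w != y) && ((val v' != w) && [|| e (val v') w, (val v'==z) && e y w | (w==z) && e y (val v')])].
Proof.
apply/setP => w; rewrite inE; apply/imsetP/idP.
  case=> u'; rewrite inE /contract => H ->; rewrite H andbT.
  exact: (valP u').
case/andP=> wy H; exists (exist _ w wy) => //; by rewrite inE /contract /=.
Qed.

Lemma deg_contract (v' : {v : V | v != y}) :
  deg (contract e y z) v' = #|[set w | (w != y) && ((val v' != w) && [|| e (val v') w, (val v'==z) && e y w | (w==z) && e y (val v')])]|.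
Proof. by rewrite /deg -img_contract card_imset //; apply: val_inj. Qed.

Hypothesis eyz : e y z.

Lemma deg_contract_ne (v' : {v : V | v != y}) : val v' != z ->
  deg (contract e y z) v' = deg e (val v').
Proof.
rewrite deg_contract /deg; case: v' => v vy /= vz.
have [eyv|neyv] := boolP (e y v).
  have -> : [set w | (w != y) && ((v != w) && [|| e v w, (v == z) && e y w | (w == z) && true])]
     = z |: ([set w | e v w] :\ y).
    apply/setP => w; rewrite !inE (negbTE vz) /= andbT.
    case wz: (w == z).
      move/eqP: wz => H; subst w. rewrite vz orbT !andbT orTb; apply/negP=> /eqP H; by move: eyz; rewrite H irr_e.
    case evw: (e v w); first last. by rewrite !andbF.
    rewrite !andbT /=; case: (w != y) => //=; apply/negP=> /eqP H; by rewrite H irr_e in evw.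
  rewrite cardsU1 !inE negb_and negbK.
  have -> : (z == y) || ~~ e v z = true.
    apply/orP; right; apply/negP=> evz; apply: (@notri y z v eyz); by rewrite sym_e.
  rewrite (cardsD1 y [set w | e v w]) inE sym_e eyv /=; lia.
have -> : [set w | (w != y) && ((v != w) && [|| e v w, (v == z) && e y w | (w == z) && false])]
     = [set w | e v w].
  apply/setP => w; rewrite !inE (negbTE vz) /= !andbF !orbF.
  case evw: (e v w); rewrite ?andbF //= andbT.
  apply/andP; split; apply/negP => /eqP H; subst.
    by rewrite sym_e evw in neyv.
  by rewrite irr_e in evw.
done.
Qed.

Lemma deg_contract_z (z' : {v : V | v != y}) : val z' = z ->
  (deg e z).-1 + (deg e y).-1 <= deg (contract e y z) z'.
Proof.
move=> vz; rewrite deg_contract vz eqxx /=.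
have sub : ([set w | e z w] :\ y) :|: ([set w | e y w] :\ z) \subset
   [set w | (w != y) && ((z != w) && [|| e z w, e y w | (w == z) && e y z])].
  apply/subsetP => w; rewrite !inE => /orP [/andP[wy ezw] | /andP[wz eyw]].
    rewrite wy /= ezw andbT; apply/negP => /eqP H; by rewrite -H irr_e in ezw.
  rewrite eyw orbT andbT (eq_sym z w) wz andbT; apply/negP => /eqP H; by rewrite H irr_e in eyw.
apply: leq_trans (subset_leq_card sub).
rewrite cardsU.
have -> : ([set w | e z w] :\ y) :&: ([set w | e y w] :\ z) = set0.
  apply/setP => w; rewrite !inE; apply/negP => /andP[/andP[_ ezw] /andP[_ eyw]].
  apply: (@notri y z w eyz ezw); by rewrite sym_e.
rewrite cards0 subn0.
have h1 := cardsD1 y [set w | e z w]; have h2 := cardsD1 z [set w | e y w].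
rewrite !inE eyz sym_e eyz in h1 h2; rewrite /deg h1 h2 /=.
lia.
Qed.

End Aux.

Lemma burn_sim (V : finType) (e : rel V) (y z : V) (xs' : seq {v : V | v != y}) : e y z ->
  forall (B' : {set {v : V | v != y}}) (B : {set V}),
  y \in B -> (forall u', u' \in B' -> val u' \in B) ->
  y \in burn_from e B (map val xs') /\
  (forall u', u' \in burn_from (contract e y z) B' xs' -> val u' \in burn_from e B (map val xs')).
Proof.
move=> eyz; elim: xs' => [|x' xs' IH] B' B yB HB /=; first by [].
apply: IH.
  by rewrite /burn_step !inE yB orbT.
move=> u'; rewrite /burn_step !inE => /orP [/eqP -> | /orP [/HB -> | ]]; rewrite ?eqxx ?orbT //.
case/existsP => v' /andP [vB]; rewrite /contract => /andP [_ H].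
apply/orP; right; apply/orP; right.
case/or3P: H => [evu | /andP[/eqP vz eyu] | /andP[/eqP uz eyv]].
- by apply/existsP; exists (val v'); rewrite HB.
- by apply/existsP; exists y; rewrite yB.
- by apply/existsP; exists y; rewrite yB uz.
Qed.

Theorem mainTheorem4 (V : finType) (e : rel V) (k : nat) (y z : V) :
  3 <= k ->
  simple_graph e -> is_tree e ->
  branching k.-1 e ->
  deg e y = k.-1 ->
  (forall v, v != y -> deg e v != k.-1) ->
  e y z -> is_internal e z ->
  branching k (contract e y z) /\
  (forall s' : seq {v : V | v != y}, is_burning_seq (contract e y z) s' ->
     exists (x1 : V) (xs : seq V),
       is_mod_burning_seq e [set y] x1 xs /\ (size xs).+1 <= size s').
Proof.
move=> k3 sg [_ nocyc] br degy degne eyz intz.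
have irr a : e a a = false by case: sg => _ H; apply: H.
have notri : forall a b c, e a b -> e b c -> e c a -> False.
  move=> a b c eab ebc eca; apply: nocyc; exists [:: a; b; c]; split => //=.
    rewrite !inE !negb_or; apply/and3P; split.
    - apply/andP; split; apply/negP=> /eqP H; subst; by rewrite irr in eab eca.
    - apply/negP=> /eqP H; subst; by rewrite irr in ebc.
    - done.
  by rewrite eab ebc eca.
have zy : z != y by apply/negP => /eqP H; subst; rewrite irr in eyz.
have key : forall d, k.-1 <= d -> d != k.-1 -> k <= d by move=> d; lia.
split.
  move=> v'; rewrite /is_internal => hint.
  case vz: (val v' == z).
    have := @deg_contract_z V e y z sg notri eyz v' (eqP vz).
    have hz := br z intz. have hz2 := degne z zy. rewrite degy. lia.
  rewrite (@deg_contract_ne V e y z sg notri eyz v' (negbT vz)) in hint *.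
  have vy : val v' != y := valP v'.
  by apply: (key _ (br _ hint) (degne _ vy)).
case=> [|x' xs'] Hb.
  exfalso; move: Hb; rewrite /is_burning_seq /= => /setP /(_ (exist _ z zy)).
  by rewrite !inE.
exists (val x'), (map val xs'); split; last by rewrite size_map.
have [yin H] : y \in burn_from e (val x' |: [set y]) (map val xs') /\
  (forall u', u' \in burn_from (contract e y z) (burn_step (contract e y z) set0 x') xs' -> val u' \in burn_from e (val x' |: [set y]) (map val xs')).
  apply: burn_sim => //; first by rewrite !inE eqxx orbT.
  move=> u'; rewrite /burn_step !inE => /orP [/eqP -> | /orP [//| ]]; first by rewrite eqxx.
  by case/existsP => v'; rewrite inE.
apply/setP => w; rewrite inE /is_mod_burning_seq.
case wy: (w == y); first by rewrite (eqP wy).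
have := H (exist _ w (negbT wy)); rewrite /= => -> //.
by move: Hb; rewrite /is_burning_seq /= => ->; rewrite inE.
Qed.
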